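(* Fix $\eta\in[0,1]$ and an integer $N\ge0$. Let $\mathcal V$ be the set of PMFs $v$ on $\mathcal S\times\mathcal U\times\mathcal Q\times\mathcal X\times\mathcal S\times\mathcal U\times\mathcal Q$ whose support is contained in the set $\mathcal A$ of tuples $(s,u,q,x,s^{+},u^{+},q^{+})$ with $u\in[0:q]$ and $u^{+}\in\{0,u+1\}$ if $q\le N-1$, $u\in[0:N]$ and $u^{+}=0$ if $q=N$, $x=f(u^{+},s)$ and $q^{+}=g_L(q,x)$, and which satisfy: (1) (stationarity) $v_{S,U,Q}(s,u,q)=v_{S^{+},U^{+},Q^{+}}(s,u,q)$ for all $(s,u,q)$; (2) (state law) $v(s,u,q,x,s^{+},u^{+},q^{+})=\Big(\sum_{\tilde s^{+}}v(s,u,q,x,\tilde s^{+},u^{+},q^{+})\Big)P(s^{+}\mid x,s)$ for all tuples in $\mathcal A$; (3) (policy) $v_{S,U,Q,U^{+}}(0,u,q,u^{+})=\bar\eta^{\,u+1}\,v_{U,Q,U^{+}}(u,q,u^{+})$ for all $(u,q,u^{+})$; (4) $\sum v=1$, $v\ge0$. Then the problem of maximizing $I_v(U^{+},U;X\mid Q)$ (conditional mutual information under $v$) over $v\in\mathcal V$ is a convex optimization problem: all constraints are linear equalities/nonnegativity in $v$, and the objective is concave in $v$ on $\mathcal V$.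
   Context: $\bar\eta=1-\eta$, $[a:b]=\{a,\dots,b\}$, $\mathcal S=\mathcal X=\{0,1\}$, $\mathcal U=\mathcal Q=[0:N]$. $f(u^{+},s)=s\,\mathbb{1}\{u^{+}=0\}$. $g_L:\mathcal Q\times\{0,1\}\to\mathcal Q$ is given by $g_L(q,1)=0$ for all $q$, $g_L(q,0)=q+1$ for $q\in[0:N-1]$, $g_L(N,0)=0$. $P(s^{+}\mid x,s)$ is the battery law of the binary energy-harvesting channel: $P(S^{+}=0\mid x,s)=\bar\eta\,\mathbb{1}\{x=s\}$ and $P(S^{+}=1\mid x,s)=1-\bar\eta\,\mathbb{1}\{x=s\}$ for $x\le s$. Marginals of $v$ are denoted by subscripts, e.g. $v_{S,U,Q}$. *)

(* Defs.v *)
From HB Require Import structures.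
From mathcomp Require Import all_boot all_order all_algebra.
From mathcomp Require Import reals exp.

Set Implicit Arguments.
Unset Strict Implicit.
Unset Printing Implicit Defensive.

Import Order.TTheory GRing.Theory Num.Theory.
Local Open Scope ring_scope.

Section Defs.
Variable R : realType.

Definition marg (T A : finType) (v : T -> R) (f : T -> A) (a : A) : R :=
  \sum_(t : T | f t == a) v t.

Definition cond_mutual_info (T A B C : finType) (v : T -> R)
    (fa : T -> A) (fb : T -> B) (fc : T -> C) : R :=
  \sum_(a : A) \sum_(b : B) \sum_(c : C)
    let pabc := marg v (fun t => (fa t, fb t, fc t)) (a, b, c) in
    if 0 < pabc then
      pabc * ln (pabc * marg v fc c /
                 (marg v (fun t => (fa t, fc t)) (a, c) *
                  marg v (fun t => (fb t, fc t)) (b, c)))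
    else 0.

Variable N : nat.

(* S = X = {0,1} = bool (0 = false), U = Q = [0:N] = 'I_N.+1 *)
Definition tup : finType :=
  (bool * 'I_N.+1 * 'I_N.+1 * bool * bool * 'I_N.+1 * 'I_N.+1)%type.

Definition tS  (t : tup) : bool      := t.1.1.1.1.1.1.
Definition tU  (t : tup) : 'I_N.+1   := t.1.1.1.1.1.2.
Definition tQ  (t : tup) : 'I_N.+1   := t.1.1.1.1.2.
Definition tX  (t : tup) : bool      := t.1.1.1.2.
Definition tSp (t : tup) : bool      := t.1.1.2.
Definition tUp (t : tup) : 'I_N.+1   := t.1.2.
Definition tQp (t : tup) : 'I_N.+1   := t.2.

Definition set_Sp (t : tup) (s' : bool) : tup :=
  (tS t, tU t, tQ t, tX t, s', tUp t, tQp t).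

Definition f_enc (up : nat) (s : bool) : bool := s && (up == 0)%N.

Definition gL (q : nat) (x : bool) : nat :=
  if x then 0%N else if (q < N)%N then q.+1 else 0%N.

(* battery law P(s+ | x, s) of the binary energy-harvesting channel *)
Definition Pbat (eta : R) (sp x s : bool) : R :=
  if sp then 1 - (1 - eta) * (x == s)%:R else (1 - eta) * (x == s)%:R.

Definition inA (t : tup) : bool :=
  [&& (if (tQ t < N)%N
       then (tU t <= tQ t)%N && ((tUp t == 0%N :> nat) || (tUp t == (tU t).+1 :> nat))
       else (tU t <= N)%N && (tUp t == 0%N :> nat)),
      tX t == f_enc (tUp t) (tS t) &
      (tQp t == gL (tQ t) (tX t) :> nat)].

(* the linear equality constraints defining V (support, (1), (2), (3), sum = 1) *)
Definition V_eq (eta : R) (v : tup -> R) : Prop :=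
  [/\ (forall t, ~~ inA t -> v t = 0),
      (forall s u q,
          marg v (fun t => (tS t, tU t, tQ t)) (s, u, q)
        = marg v (fun t => (tSp t, tUp t, tQp t)) (s, u, q)),
      (forall t, inA t ->
          v t = (\sum_(s' : bool) v (set_Sp t s')) * Pbat eta (tSp t) (tX t) (tS t)),
      (forall u q up,
          marg v (fun t => (tS t, tU t, tQ t, tUp t)) (false, u, q, up)
        = (1 - eta) ^+ (u.+1) * marg v (fun t => (tU t, tQ t, tUp t)) (u, q, up)) &
      \sum_(t : tup) v t = 1].

Definition inV (eta : R) (v : tup -> R) : Prop :=
  V_eq eta v /\ (forall t, 0 <= v t).

Definition objective (v : tup -> R) : R :=
  cond_mutual_info v (fun t => (tUp t, tU t)) tX tQ.

End Defs.

(* Main.v *)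
Require Import Defs.
From HB Require Import structures.
From mathcomp Require Import all_boot all_order all_algebra.
From mathcomp Require Import reals exp.
From mathcomp Require Import ring lra.
Set Implicit Arguments.
Unset Strict Implicit.
Unset Printing Implicit Defensive.
Import Order.TTheory GRing.Theory Num.Theory.
Local Open Scope ring_scope.

Section Gen.
Variable R : realType.

Definition G (x y : R) : R := if 0 < x then x * ln (y / x) else 0.

Lemma ge0_cases (x : R) : 0 <= x -> 0 < x \/ x = 0.
Proof. by rewrite le_eqVlt => /orP[/eqP->|->]; [right|left]. Qed.

Lemma ln_le_sub1 (x : R) : 0 < x -> ln x <= x - 1.
Proof. move=> x0; have h : -1 < x - 1 by lra.
have := le_ln1Dx h; by rewrite addrCA subrr addr0. Qed.

Lemma G_hom (l x y : R) : 0 <= l -> l * G x y = G (l * x) (l * y).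
Proof.
move=> l0; rewrite /G; case: (ge0_cases l0) => [lp|->]; last by rewrite !mul0r ltxx.
rewrite pmulr_rgt0 //; case: ifP => _; last by rewrite mulr0.
rewrite mulrA; congr (_ * ln _); rewrite invfM mulrACA divff ?gt_eqF // mul1r //.
Qed.

Lemma G_super (a b c d : R) : 0 <= a <= c -> 0 <= b <= d ->
  G a c + G b d <= G (a + b) (c + d).
Proof.
move=> /andP[a0 ac] /andP[b0 bd]; rewrite /G.
case: (ge0_cases a0) => [ap|az]; case: (ge0_cases b0) => [bp|bz].
- have Sp0 : 0 < a + b by lra.
  rewrite ap bp Sp0.
  have cp : 0 < c by lra. have dp : 0 < d by lra.
  set S := a + b; set T := c + d.
  have Sp : 0 < S by rewrite /S; lra. have Tp : 0 < T by rewrite /T; lra.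
  suff h : a * (ln (c / a) - ln (T / S)) + b * (ln (d / b) - ln (T / S)) <= 0.
    rewrite -subr_le0; apply: le_trans h; rewrite le_eqVlt; apply/orP; left; apply/eqP.
    rewrite /S; ring.
  have h1 : ln (c / a) - ln (T / S) = ln (c * S / (a * T)).
    rewrite -ln_div ?posrE ?divr_gt0 //; congr ln; field; apply/andP; split; lra.
  have h2 : ln (d / b) - ln (T / S) = ln (d * S / (b * T)).
    rewrite -ln_div ?posrE ?divr_gt0 //; congr ln; field; apply/andP; split; lra.
  rewrite h1 h2.
  have e1 := ln_le_sub1 (divr_gt0 (mulr_gt0 cp Sp) (mulr_gt0 ap Tp)).
  have e2 := ln_le_sub1 (divr_gt0 (mulr_gt0 dp Sp) (mulr_gt0 bp Tp)).
  apply: (le_trans (lerD (ler_wpM2l (ltW ap) e1) (ler_wpM2l (ltW bp) e2))).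
  have -> : a * (c * S / (a * T) - 1) + b * (d * S / (b * T) - 1) = (c + d) * S / T - S.
    rewrite /S; field; apply/and3P; split; lra.
  rewrite -/T mulrAC divff ?gt_eqF // mul1r subrr //.
- rewrite bz !addr0 ltxx ap addr0 ler_pM2l // ler_ln ?posrE ?divr_gt0 //; try lra.
  by rewrite ler_pM2r ?invr_gt0 //; lra.
- rewrite az !add0r ltxx bp add0r ler_pM2l // ler_ln ?posrE ?divr_gt0 //; try lra.
  by rewrite ler_pM2r ?invr_gt0 //; lra.
- by rewrite az bz !addr0 ltxx addr0.
Qed.

Lemma G_concave (l x1 y1 x2 y2 : R) : 0 <= l <= 1 -> 0 <= x1 <= y1 -> 0 <= x2 <= y2 ->
  l * G x1 y1 + (1 - l) * G x2 y2 <= G (l * x1 + (1 - l) * x2) (l * y1 + (1 - l) * y2).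
Proof.
move=> /andP[l0 l1] /andP[? ?] /andP[? ?].
rewrite G_hom // G_hom; last lra.
apply: G_super; apply/andP; split; try nra.
Qed.
End Gen.
Section Marg.
Variable R : realType.
Variable T : finType.

Lemma marg_lin (A : finType) (v1 v2 : T -> R) (l : R) (f : T -> A) a :
  marg (fun w => l * v1 w + (1 - l) * v2 w) f a = l * marg v1 f a + (1 - l) * marg v2 f a.
Proof. by rewrite /marg big_split /= -!mulr_sumr. Qed.

Lemma marg_ge0 (A : finType) (v : T -> R) (f : T -> A) a :
  (forall t, 0 <= v t) -> 0 <= marg v f a.
Proof. by move=> v0; apply: sumr_ge0. Qed.

Lemma marg_le (A B : finType) (v : T -> R) (f : T -> A) (g : T -> B) a b :
  (forall t, 0 <= v t) -> (forall t, f t == a -> g t == b) -> marg v f a <= marg v g b.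
Proof.
move=> v0 H; rewrite /marg big_mkcond [X in _ <= X]big_mkcond /=; apply: ler_sum => t _.
case E: (f t == a); first by rewrite (H t E).
by case: (g t == b).
Qed.

Lemma marg_part (A B : finType) (v : T -> R) (f : T -> A) (g : T -> B) a :
  marg v f a = \sum_(b : B) \sum_(t | (f t == a) && (g t == b)) v t.
Proof. by rewrite /marg (partition_big g xpredT). Qed.

Lemma eq_marg_supp (A B : finType) (v : T -> R) (f : T -> A) (g : T -> B) a b :
  (forall t, v t != 0 -> (f t == a) = (g t == b)) -> marg v f a = marg v g b.
Proof.
move=> H; rewrite /marg big_mkcond [RHS]big_mkcond /=; apply: eq_bigr => t _.
by case: (eqVneq (v t) 0) => [->|/H ->]; rewrite ?if_same.
Qed.

Lemma cmi_decomp (A B C : finType) (v : T -> R) (fa : T -> A) (fb : T -> B) (fc : T -> C) :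
  (forall t, 0 <= v t) ->
  cond_mutual_info v fa fb fc =
    \sum_(b : B) \sum_(c : C) G (marg v (fun t => (fb t, fc t)) (b, c)) (marg v fc c)
  - \sum_(a : A) \sum_(b : B) \sum_(c : C)
       G (marg v (fun t => (fa t, fb t, fc t)) (a, b, c)) (marg v (fun t => (fa t, fc t)) (a, c)).
Proof.
move=> v0; rewrite /cond_mutual_info.
set pabc := fun a b c => marg v (fun t => (fa t, fb t, fc t)) (a, b, c).
set pac := fun a c => marg v (fun t => (fa t, fc t)) (a, c).
set pbc := fun b c => marg v (fun t => (fb t, fc t)) (b, c).
set pc := fun c => marg v fc c.
have le_ac a b c : pabc a b c <= pac a c.
  apply: marg_le => // t; rewrite !xpair_eqE; by do ![case: (_ == _)].
have le_bc a b c : pabc a b c <= pbc b c.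
  apply: marg_le => // t; rewrite !xpair_eqE; by do ![case: (_ == _)].
have le_c b c : pbc b c <= pc c.
  apply: marg_le => // t; rewrite !xpair_eqE; by do ![case: (_ == _)].
pose H1 a b c := if 0 < pabc a b c then pabc a b c * ln (pc c / pbc b c) else 0.
transitivity (\sum_a \sum_b \sum_c H1 a b c - \sum_a \sum_b \sum_c G (pabc a b c) (pac a c)).
  rewrite -sumrB; apply: eq_bigr => a _; rewrite -sumrB; apply: eq_bigr => b _.
  rewrite -sumrB; apply: eq_bigr => c _ /=; rewrite /H1 /G -/(pabc a b c) -/(pac a c) -/(pbc b c) -/(pc c).
  case: ifP => hp; last by rewrite subrr.
  have hac := lt_le_trans hp (le_ac a b c).
  have hbc := lt_le_trans hp (le_bc a b c).
  have hc := lt_le_trans hbc (le_c b c).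
  rewrite -mulrBr -ln_div ?posrE ?divr_gt0 //; congr (_ * ln _).
  field; rewrite !gt_eqF //.
congr (_ - _).
rewrite exchange_big; apply: eq_bigr => b _; rewrite exchange_big; apply: eq_bigr => c _ /=.
transitivity (\sum_a pabc a b c * ln (pc c / pbc b c)).
  apply: eq_bigr => a _; rewrite /H1; case: ifP => // /negbT; rewrite -leNgt => h.
  have -> : pabc a b c = 0 by apply/le_anti; rewrite h marg_ge0.
  by rewrite mul0r.
rewrite -mulr_suml.
have -> : \sum_a pabc a b c = pbc b c.
  rewrite /pbc (marg_part _ _ fa); apply: eq_bigr => a _; rewrite /pabc /marg.
  apply: eq_bigl => t; rewrite !xpair_eqE; by do ![case: (_ == _)].
rewrite /G -/(pbc b c) -/(pc c); case: ifP => // /negbT; rewrite -leNgt => h.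
have -> : pbc b c = 0 by apply/le_anti; rewrite h marg_ge0.
by rewrite mul0r.
Qed.
End Marg.
Section Model.
Variable R : realType.
Variable N : nat.
Variable eta : R.
Hypothesis eta01 : 0 <= eta <= 1.

Definition kk (a : 'I_N.+1 * 'I_N.+1) (x : bool) : R :=
  if (a.1 == 0%N :> nat) then (if x then 1 - (1 - eta) ^+ (a.2).+1 else (1 - eta) ^+ (a.2).+1)
  else (if x then 0 else 1).

Lemma pw01 n : 0 <= (1 - eta) ^+ n <= 1.
Proof.
case/andP: eta01 => e0 e1.
by rewrite exprn_ge0 ?exprn_ile1 //; lra.
Qed.

Lemma kk_ge0 a x : 0 <= kk a x.
Proof. by rewrite /kk; case/andP: (pw01 (a.2).+1) => h0 h1; do !case: ifP => _ //; lra. Qed.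

Definition pABC (v : tup N -> R) a x q :=
  marg v (fun t => ((tUp t, tU t), tX t, tQ t)) (a, x, q).
Definition pAC (v : tup N -> R) a q :=
  marg v (fun t => ((tUp t, tU t), tQ t)) (a, q).

Lemma pAC_split (v : tup N -> R) a q : pAC v a q = pABC v a true q + pABC v a false q.
Proof.
rewrite /pAC (marg_part _ _ (@tX N)) big_bool /pABC /marg; congr (_ + _);
  apply: eq_bigl => t; rewrite !xpair_eqE; by do ![case: (_ == _)].
Qed.

Lemma supp (v : tup N -> R) t : inV eta v -> v t != 0 -> tX t = f_enc (tUp t) (tS t).
Proof.
move=> [[hs _ _ _ _] _] hv; have : inA t.
  by apply/negPn/negP => /hs /eqP; rewrite (negbTE hv).
by case/and3P => _ /eqP.
Qed.

Lemma key (v : tup N -> R) a x q : inV eta v -> pABC v a x q = kk a x * pAC v a q.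
Proof.
move=> hV; have hV' := hV; case: hV' => [[_ _ _ hpol _] _].
case: a => up u; rewrite /kk /=.
case: ifP => hup.
- have hf : pABC v (up, u) false q = (1 - eta) ^+ u.+1 * pAC v (up, u) q.
    have -> : pAC v (up, u) q = marg v (fun t => (tU t, tQ t, tUp t)) (u, q, up).
      rewrite /pAC /marg; apply: eq_bigl => t; rewrite !xpair_eqE; by do ![case: (_ == _)].
    rewrite -hpol /pABC; apply: eq_marg_supp => t /(supp hV) hX.
    rewrite !xpair_eqE hX /f_enc.
    case: (eqVneq (tUp t) up) => [->|]; last by rewrite !andbF.
    rewrite hup andbT /=; by do ![case: (_ == _)].
  case: x; last exact: hf.
  apply: (addIr (pABC v (up, u) false q)); rewrite -pAC_split hf; ring.
- have ht : pABC v (up, u) true q = 0.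
    rewrite /pABC /marg; apply: big1 => t; rewrite !xpair_eqE => /andP[/andP[/andP[/eqP hu _] /eqP hx] _].
    apply/eqP/negP => /negP /(supp hV); rewrite hx /f_enc hu hup andbF //.
  case: x; first by rewrite ht mul0r.
  by rewrite pAC_split ht add0r mul1r.
Qed.
End Model.
Lemma G_lin (R : realType) (k y : R) : 0 <= k -> 0 <= y ->
  G (k * y) y = (if 0 < k then k * ln k^-1 else 0) * y.
Proof.
move=> k0 y0; rewrite /G.
case: (ge0_cases y0) => [yp|->]; last by rewrite !mulr0 ltxx.
case: (ge0_cases k0) => [kp|->]; last by rewrite mul0r ltxx mul0r.
rewrite pmulr_rgt0 // kp.
have -> : y / (k * y) = k^-1 by field; rewrite !gt_eqF.
by rewrite yp mulrAC.
Qed.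

Lemma sum_lin (R : realType) (I : finType) (l m : R) (F1 F2 : I -> R) :
  \sum_(i : I) (l * F1 i + m * F2 i) = l * \sum_i F1 i + m * \sum_i F2 i.
Proof. by rewrite big_split /= -!mulr_sumr. Qed.

Section Main.
Variable R : realType.
Variable N : nat.
Variable eta : R.
Hypothesis eta01 : 0 <= eta <= 1.

Definition Kc (a : 'I_N.+1 * 'I_N.+1) (x : bool) : R :=
  if 0 < kk eta a x then kk eta a x * ln (kk eta a x)^-1 else 0.

Definition Sv (v : tup N -> R) : R :=
  \sum_(b : bool) \sum_(c : 'I_N.+1)
     G (marg v (fun t => (tX t, tQ t)) (b, c)) (marg v (@tQ N) c).

Definition Lv (v : tup N -> R) : R :=
  \sum_(a : 'I_N.+1 * 'I_N.+1) \sum_(b : bool) \sum_(c : 'I_N.+1) Kc a b * pAC v a c.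

Lemma obj_eq (v : tup N -> R) : inV eta v -> objective v = Sv v - Lv v.
Proof.
move=> hV; rewrite /objective cmi_decomp; last exact: hV.2.
congr (_ - _); apply: eq_bigr => a _; apply: eq_bigr => b _; apply: eq_bigr => c _.
rewrite -[marg v _ (a, b, c)]/(pABC v a b c) -[marg v _ (a, c)]/(pAC v a c).
rewrite (@key R N eta v a b c hV) G_lin //; first exact: kk_ge0.
apply: marg_ge0; exact: hV.2.
Qed.

Lemma Lv_lin (v1 v2 : tup N -> R) (l : R) :
  Lv (fun w => l * v1 w + (1 - l) * v2 w) = l * Lv v1 + (1 - l) * Lv v2.
Proof.
rewrite /Lv -sum_lin; apply: eq_bigr => a _; rewrite -sum_lin; apply: eq_bigr => b _.
rewrite -sum_lin; apply: eq_bigr => c _; rewrite /pAC marg_lin; ring.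
Qed.

Lemma Sv_conc (v1 v2 : tup N -> R) (l : R) : 0 <= l <= 1 ->
  (forall t, 0 <= v1 t) -> (forall t, 0 <= v2 t) ->
  l * Sv v1 + (1 - l) * Sv v2 <= Sv (fun w => l * v1 w + (1 - l) * v2 w).
Proof.
move=> hl h1 h2; rewrite /Sv !mulr_sumr -big_split; apply: ler_sum => b _.
rewrite /= !mulr_sumr -big_split; apply: ler_sum => c _; rewrite !marg_lin.
have hb (v : tup N -> R) : (forall t, 0 <= v t) ->
    0 <= marg v (fun t => (tX t, tQ t)) (b, c) <= marg v (@tQ N) c.
  move=> h; apply/andP; split; first exact: marg_ge0.
  by apply: marg_le => // t; rewrite xpair_eqE => /andP[].
exact: (G_concave hl (hb _ h1) (hb _ h2)).
Qed.
End Main.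
Lemma Veq_aff (R : realType) (eta : R) (N : nat) (v1 v2 : tup N -> R) (l : R) :
  V_eq eta v1 -> V_eq eta v2 -> V_eq eta (fun w => l * v1 w + (1 - l) * v2 w).
Proof.
move=> [s1 st1 sl1 p1 n1] [s2 st2 sl2 p2 n2]; split.
- by move=> t ht; rewrite (s1 t ht) (s2 t ht) !mulr0 addr0.
- by move=> s u q; rewrite !marg_lin st1 st2.
- move=> t ht; rewrite (sl1 t ht) (sl2 t ht) big_split /= -!mulr_sumr; ring.
- by move=> u q up; rewrite !marg_lin p1 p2; ring.
- by rewrite big_split /= -!mulr_sumr n1 n2; ring.
Qed.

Theorem lemma1 (R : realType) (eta : R) (N : nat) :
  0 <= eta <= 1 ->
  (forall (v1 v2 : tup N -> R) (l : R),
      V_eq eta v1 -> V_eq eta v2 ->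
      V_eq eta (fun w => l * v1 w + (1 - l) * v2 w)) /\
  (forall (v1 v2 : tup N -> R) (l : R), 0 <= l <= 1 ->
      inV eta v1 -> inV eta v2 ->
      inV eta (fun w => l * v1 w + (1 - l) * v2 w)) /\
  (forall (v1 v2 : tup N -> R) (l : R), 0 <= l <= 1 ->
      inV eta v1 -> inV eta v2 ->
      l * objective v1 + (1 - l) * objective v2
        <= objective (fun w => l * v1 w + (1 - l) * v2 w)).
Proof.
move=> he.
have hconv : forall (v1 v2 : tup N -> R) (l : R), 0 <= l <= 1 ->
      inV eta v1 -> inV eta v2 ->
      inV eta (fun w => l * v1 w + (1 - l) * v2 w).
  move=> v1 v2 l /andP[l0 l1] [e1 n1] [e2 n2]; split; first exact: Veq_aff.
  move=> t; apply: addr_ge0; apply: mulr_ge0 => //; lra.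
split; first by move=> *; exact: Veq_aff.
split; first exact: hconv.
move=> v1 v2 l hl h1 h2.
rewrite (obj_eq he h1) (obj_eq he h2) (obj_eq he (hconv _ _ _ hl h1 h2)) Lv_lin.
have := Sv_conc hl h1.2 h2.2.
set S1 := Sv v1; set S2 := Sv v2; set Sw := Sv _.
move=> h; rewrite !mulrBr; lra.
Qed.
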